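(* Let $G$ be a claw-free graph (i.e., $G$ contains no induced subgraph isomorphic to $K_{1,3}$). Then $\alpha_{\mathrm{od}}(G)=\alpha(G^2)$ and $\chi_{\mathrm{so}}(G)=\chi(G^2)$.
   Context: All graphs are finite, simple and undirected. For a vertex $v$, $N(v)$ is its open neighborhood. An odd independent set in a graph $G=(V,E)$ is an independent set $S\subseteq V$ such that for every $v\in V\setminus S$, either $N(v)\cap S=\varnothing$ or $|N(v)\cap S|$ is odd. $\alpha_{\mathrm{od}}(G)$ denotes the maximum size of an odd independent set of $G$. A strong odd coloring of $G$ is a proper vertex coloring such that for every vertex $v$, each color used on $N(v)$ appears an odd number of times in $N(v)$; $\chi_{\mathrm{so}}(G)$ is the minimum number of colors in a strong odd coloring. $G^2$ is the square of $G$: same vertex set, two distinct vertices adjacent iff their distance in $G$ is at most $2$. $\alpha$ and $\chi$ denote independence number and chromatic number. *)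

(* Defs.v *)
From mathcomp Require Import all_boot.
Set Implicit Arguments. Unset Strict Implicit. Unset Printing Implicit Defensive.

Section Graphs.
Variables (T : finType) (e : rel T).

Definition simple_graph := irreflexive e /\ symmetric e.

Definition nbhd (v : T) : {set T} := [set u | e v u].

Definition claw_free : Prop :=
  ~ exists v x y z : T,
      [/\ e v x, e v y, e v z
        & [/\ x != y, x != z, y != z & [&& ~~ e x y, ~~ e x z & ~~ e y z]]].

Definition sq_rel : rel T :=
  fun x y => (x != y) && (e x y || [exists z, e x z && e z y]).

Definition independent (S : {set T}) : bool :=
  [forall x in S, forall y in S, ~~ e x y].

Definition odd_independent (S : {set T}) : bool :=
  independent S &&
  [forall v in ~: S, (#|nbhd v :&: S| == 0) || odd #|nbhd v :&: S|].

Definition alpha : nat := \max_(S : {set T} | independent S) #|S|.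
Definition alpha_od : nat := \max_(S : {set T} | odd_independent S) #|S|.

Definition proper_col (k : nat) (f : {ffun T -> 'I_k}) : bool :=
  [forall x, forall y, e x y ==> (f x != f y)].

Definition strong_odd_col (k : nat) (f : {ffun T -> 'I_k}) : bool :=
  proper_col f &&
  [forall v, forall c : 'I_k,
    (#|[set u in nbhd v | f u == c]| == 0) || odd #|[set u in nbhd v | f u == c]|].

Definition colorable (k : nat) : bool := [exists f : {ffun T -> 'I_k}, proper_col f].
Definition so_colorable (k : nat) : bool :=
  [exists f : {ffun T -> 'I_k}, strong_odd_col f].

Hypothesis (eirr : irreflexive e).

Lemma so_colorable_card : so_colorable #|T|.
Proof.
apply/existsP; exists [ffun x => enum_rank x]; apply/andP; split.
  apply/forallP => x; apply/forallP => y; apply/implyP => exy.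
  rewrite !ffunE; apply/negP => /eqP /enum_rank_inj Exy.
  by move: exy; rewrite Exy eirr.
apply/forallP => v; apply/forallP => c; apply/orP.
have: #|[set u in nbhd v | [ffun x => enum_rank x] u == c]| <= 1.
  apply/card_le1_eqP => x y; rewrite !inE !ffunE => /andP[_ /eqP hx] /andP[_ /eqP hy].
  by apply: enum_rank_inj; rewrite hx hy.
by case: #|_| => [|[|]] //= _; [left | right].
Qed.

Lemma colorable_card : colorable #|T|.
Proof.
case/existsP: so_colorable_card => f /andP[pf _]; by apply/existsP; exists f.
Qed.

End Graphs.

Definition chi (T : finType) (e : rel T) (he : irreflexive e) : nat :=
  ex_minn (ex_intro (colorable e) #|T| (colorable_card he)).

Definition chi_so (T : finType) (e : rel T) (he : irreflexive e) : nat :=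
  ex_minn (ex_intro (so_colorable e) #|T| (so_colorable_card he)).

Lemma sq_rel_irr (T : finType) (e : rel T) : irreflexive (sq_rel e).
Proof. by move=> x; rewrite /sq_rel eqxx. Qed.

(* Main.v *)
Require Import Defs.
From mathcomp Require Import all_boot.

Section S.
Variables (T : finType) (e : rel T) (he : irreflexive e) (hs : symmetric e)
  (cf : claw_free e).

Lemma claw_le1 v (A : {set T}) :
  (forall x, x \in A -> e v x) -> {in A &, forall x y, ~~ e x y} ->
  (#|A| == 0) || odd #|A| -> #|A| <= 1.
Proof.
move=> hv hind hodd.
have h2 : #|A| <= 2.
  rewrite leqNgt; apply/negP => h3; apply: cf.
  have /set0Pn [x xA] : A != set0 by rewrite -card_gt0 (ltn_trans _ h3).
  have h1 : 1 < #|A :\ x| by move: h3; rewrite (cardsD1 x A) xA.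
  have /set0Pn [y yA] : A :\ x != set0 by rewrite -card_gt0 (ltn_trans _ h1).
  have h0 : 0 < #|A :\ x :\ y| by move: h1; rewrite (cardsD1 y (A :\ x)) yA.
  have /set0Pn [z zA] : A :\ x :\ y != set0 by rewrite -card_gt0.
  move: yA zA; rewrite !inE => /andP[yx yA] /andP[zy /andP[zx zA]].
  exists v, x, y, z; split; try by apply: hv.
  split; try by rewrite eq_sym.
  by rewrite !hind.
move: hodd h2; case: #|A| => [|[|[|]]] //.
Qed.

Lemma odd_ind_sq (S : {set T}) : odd_independent e S = independent (sq_rel e) S.
Proof.
apply/idP/idP.
- case/andP => /forallP hi /forallP ho.
  apply/forallP => x; apply/implyP => xS; apply/forallP => y; apply/implyP => yS.
  rewrite /sq_rel negb_and negbK orbC -implybE; apply/implyP.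
  case/orP => [exy|/existsP [z /andP [xz zy]]].
    by move: (hi x); rewrite xS /= => /forallP /(_ y); rewrite yS /= exy.
  have zS : z \notin S.
    apply/negP => zS; move: (hi x); rewrite xS /= => /forallP /(_ z).
    by rewrite zS /= xz.
  have := ho z; rewrite inE zS /= => hz.
  have := claw_le1 z (nbhd e z :&: S).
  case/(_ _ _ hz)/Wrap.
  + by move=> u; rewrite !inE => /andP[].
  + move=> a b; rewrite !inE => /andP[_ aS] /andP[_ bS].
    by move: (hi a); rewrite aS /= => /forallP /(_ b); rewrite bS.
  move=> /card_le1_eqP /(_ x y); rewrite !inE xS yS zy hs xz => /(_ isT isT) ->.
  by [].
- move=> /forallP hi; apply/andP; split.
    apply/forallP => x; apply/implyP => xS; apply/forallP => y; apply/implyP => yS.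
    case: (eqVneq x y) => [->|xy]; first by rewrite he.
    move: (hi x); rewrite xS /= => /forallP /(_ y); rewrite yS /= /sq_rel xy /=.
    by rewrite negb_or => /andP[].
  apply/forallP => v; apply/implyP => vS.
  suff : #|nbhd e v :&: S| <= 1 by case: #|_| => [|[|]].
  apply/card_le1_eqP => x y; rewrite !inE => /andP[vx xS] /andP[vy yS].
  case: (eqVneq x y) => // xy.
  move: (hi x); rewrite xS /= => /forallP /(_ y); rewrite yS /= /sq_rel xy /=.
  by rewrite negb_or => /andP[_ /existsPn /(_ v)]; rewrite hs vx vy.
Qed.

Lemma so_sq k (f : {ffun T -> 'I_k}) : strong_odd_col e f = proper_col (sq_rel e) f.
Proof.
apply/idP/idP.
- case/andP => /forallP hp /forallP ho.
  apply/forallP => x; apply/forallP => y; apply/implyP.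
  rewrite /sq_rel => /andP[xy /orP [exy|/existsP [z /andP [xz zy]]]].
    by move: (hp x) => /forallP /(_ y); rewrite exy.
  apply/negP => /eqP fxy.
  have := ho z => /forallP /(_ (f x)) hz.
  have := claw_le1 z ([set u in nbhd e z | f u == f x]).
  case/(_ _ _ hz)/Wrap.
  + by move=> u; rewrite !inE => /andP[].
  + move=> a b; rewrite !inE => /andP[_ /eqP fa] /andP[_ /eqP fb].
    apply/negP => eab; move: (hp a) => /forallP /(_ b); rewrite eab fa fb.
    by rewrite eqxx.
  move=> /card_le1_eqP /(_ x y); rewrite !inE zy hs xz fxy eqxx => /(_ isT isT) exy.
  by rewrite exy eqxx in xy.
- move=> /forallP hp; apply/andP; split.
    apply/forallP => x; apply/forallP => y; apply/implyP => exy.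
    move: (hp x) => /forallP /(_ y); rewrite /sq_rel exy orTb andbT.
    case: (eqVneq x y) => [xy|//]; by rewrite xy he in exy.
  apply/forallP => v; apply/forallP => c.
  suff : #|[set u in nbhd e v | f u == c]| <= 1 by case: #|_| => [|[|]].
  apply/card_le1_eqP => x y; rewrite !inE => /andP[vx /eqP fx] /andP[vy /eqP fy].
  case: (eqVneq x y) => // xy.
  move: (hp x) => /forallP /(_ y); rewrite /sq_rel xy /=.
  have -> : [exists z, e x z && e z y] by apply/existsP; exists v; rewrite hs vx vy.
  by rewrite orbT fx fy eqxx.
Qed.

End S.

Theorem theorem1 (T : finType) (e : rel T) (he : irreflexive e) (hs : symmetric e) :
  claw_free e ->
  alpha_od e = alpha (sq_rel e) /\ chi_so he = chi (sq_rel_irr e).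
Proof.
move=> cf; split.
  by rewrite /alpha_od /alpha; apply: eq_bigl => S; rewrite odd_ind_sq.
rewrite /chi_so /chi; apply: eq_ex_minn => k.
rewrite /so_colorable /colorable; apply: eq_existsb => f.
exact: so_sq.
Qed.
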